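(* Let $g\ge2$ and $n\ge2$. Then $P_{g,n}(a_1,\dots,a_n)$ is divisible by $\prod_{i=1}^n a_i$ in the polynomial ring $\mathbb{Q}[a_1,\dots,a_n]$, and $\tilde P(a_1,\dots,a_n):=P_{g,n}(a_1,\dots,a_n)/\prod_{i=1}^na_i$ is a polynomial of degree (at most) $2g-4+n$.
   Context: For $g\ge2$, $n\ge1$, $$P_{g,n}(a_1,\dots,a_n):=\sum_{k=1}^n\frac{(-1)^k(2g-3+k)!}{k!}\sum_{(I_1,\dots,I_k)}\ \sum_{\substack{d_1,\dots,d_k\in\mathbb{Z}_{\ge0}\\ d_1+\cdots+d_k=g-2+n}}\prod_{j=1}^k\binom{2a_{[I_j]}+1}{2d_j}\prod_{i=1}^{|I_j|-1}(2d_j+1-2i),$$ where $(I_1,\dots,I_k)$ runs over ordered $k$-tuples of nonempty pairwise disjoint subsets of $\{1,\dots,n\}$ with union $\{1,\dots,n\}$, $a_{[I]}:=\sum_{\ell\in I}a_\ell$, and $\binom{x}{m}:=x(x-1)\cdots(x-m+1)/m!$ for $m\ge0$, a polynomial in $x$ of degree $m$. *)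

(* Defs.v *)
From mathcomp Require Import all_boot all_order all_algebra.
Set Implicit Arguments. Unset Strict Implicit. Unset Printing Implicit Defensive.
Import GRing.Theory Num.Theory.
Local Open Scope ring_scope.

Definition binomQ (x : rat) (m : nat) : rat :=
  (\prod_(i < m) (x - i%:R)) / (m`!)%:R.

Definition ordered_set_partition (n k : nat) (I : {ffun 'I_k -> {set 'I_n}}) : bool :=
  [&& [forall j, I j != set0],
      [forall j, forall j', (j != j') ==> [disjoint I j & I j']]
    & (\bigcup_(j < k) I j == [set: 'I_n])].

Definition asum (n : nat) (a : 'I_n -> rat) (I : {set 'I_n}) : rat :=
  \sum_(l in I) a l.

(* The polynomial P_{g,n}, as a function of (a_1,...,a_n) in Q^n.
   The d_j range over nonnegative integers with sum g-2+n, hence each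
   d_j < g-1+n; they are encoded as ordinals 'I_(g-1+n). *)
Definition Pgn (g n : nat) (a : 'I_n -> rat) : rat :=
  \sum_(1 <= k < n.+1)
    ((-1) ^+ k * ((2 * g - 3 + k)`!)%:R / (k`!)%:R *
     \sum_(I : {ffun 'I_k -> {set 'I_n}} | ordered_set_partition I)
       \sum_(d : {ffun 'I_k -> 'I_(g - 1 + n)} |
               (\sum_(j < k) (d j : nat))%N == (g - 2 + n)%N)
         \prod_(j < k)
           (binomQ (2 * asum a (I j) + 1) (2 * d j) *
            \prod_(1 <= i < #|I j|) (((2 * d j + 1)%N)%:R - ((2 * i)%N)%:R))).

Definition mpoly (n : nat) := seq (rat * {ffun 'I_n -> nat}).

Definition meval (n : nat) (p : mpoly n) (a : 'I_n -> rat) : rat :=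
  \sum_(m <- (p : seq (rat * {ffun 'I_n -> nat}))) m.1 * \prod_(i < n) a i ^+ m.2 i.

Definition mdeg_le (n : nat) (p : mpoly n) (D : nat) : bool :=
  all (fun m : rat * {ffun 'I_n -> nat} => (\sum_(i < n) m.2 i <= D)%N) p.

Arguments Pgn g n a : clear implicits.

(* Main.v *)
From Pilot Require Import Defs.
From mathcomp Require Import all_boot all_order all_algebra.
From mathcomp Require Import zify ring.
Set Implicit Arguments. Unset Strict Implicit. Unset Printing Implicit Defensive.
Import GRing.Theory Num.Theory.
Local Open Scope ring_scope.

Section Gen.
Variables (R : comNzRingType) (phi : {rmorphism rat -> R}) (g n : nat) (a : 'I_n -> R).

Definition asumG (S : {set 'I_n}) : R := \sum_(l in S) a l.
Definition BG (x : R) (m : nat) : R := (\prod_(i < m) (x - i%:R)) * phi ((m`!)%:R)^-1.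
Definition Gw (S : {set 'I_n}) (e : nat) : R :=
  BG (2 * asumG S + 1) (2 * e) *
  \prod_(1 <= i < #|S|) (((2 * e + 1)%N)%:R - ((2 * i)%N)%:R).
Definition Phi k (I : {ffun 'I_k -> {set 'I_n}}) : R :=
  \sum_(d : {ffun 'I_k -> 'I_(g - 1 + n)} |
          (\sum_(j < k) (d j : nat))%N == (g - 2 + n)%N)
    \prod_(j < k) Gw (I j) (d j).
Definition cq (k : nat) : rat := (-1) ^+ k * ((2 * g - 3 + k)`!)%:R / (k`!)%:R.
Definition PG : R :=
  \sum_(1 <= k < n.+1)
    (phi (cq k) * \sum_(I : {ffun 'I_k -> {set 'I_n}} | ordered_set_partition I) Phi I).
End Gen.


Section Comb.
Variables (R : comNzRingType) (phi : {rmorphism rat -> R}) (g n : nat) (a : 'I_n -> R).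
Variable i0 : 'I_n.
Hypothesis ha : a i0 = 0.

Local Notation Gw := (Gw phi a).
Definition cf (e s : nat) : R := ((2 * e + 1)%N)%:R - ((2 * s)%N)%:R.

Lemma Gw_set0 e : Gw set0 e = (e == 0%N)%:R.
Proof.
rewrite /Gw /asumG big_set0 mulr0 add0r cards0 big_geq // mulr1 /BG.
case: e => [|e].
  by rewrite big_ord0 mul1r fact0 invr1 rmorph1.
rewrite mul2n doubleS !big_ord_recl /= subrr mul0r mulr0 mul0r.
by [].
Qed.

Lemma Gw_add (S : {set 'I_n}) e : i0 \notin S -> Gw (i0 |: S) e = Gw S e * cf e #|S|.
Proof.
move=> hS.
have hA : asumG a (i0 |: S) = asumG a S by rewrite /asumG big_setU1 //= ha add0r.
rewrite /Gw hA cardsU1 hS add1n.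
case hc: #|S| => [|s].
  move/cards0_eq: hc => ->.
  rewrite big_geq // /cf muln0 subr0 mulr1.
  have := Gw_set0 e; rewrite /Gw cards0 big_geq // mulr1 => ->.
  by case: e => [|e]; rewrite ?mul0r ?mulr0 ?mul1r.
by rewrite big_nat_recr //= -mulrA.
Qed.
End Comb.


Section Cov.
Variable n : nat.
Definition cnt k (I : {ffun 'I_k -> {set 'I_n}}) l := (\sum_(j < k) (l \in I j))%N.
Definition cov k (S : {set 'I_n}) (I : {ffun 'I_k -> {set 'I_n}}) :=
  [forall l, cnt I l == (l \in S)].
Definition nonemp k (I : {ffun 'I_k -> {set 'I_n}}) := [forall j, I j != set0].

Lemma sumb0 k (b : 'I_k -> bool) : (\sum_j b j)%N = 0%N -> forall j, b j = false.
Proof.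
move/eqP; rewrite sum_nat_eq0 => /forallP H j.
by have := H j; case: (b j).
Qed.

Lemma sumb1 k (b : 'I_k -> bool) : (\sum_j b j)%N = 1%N ->
  exists j0, forall j, b j = (j == j0).
Proof.
move=> H.
case: (pickP b) => [j0 hj0|none]; last first.
  by move: H; rewrite big1 // => j _; rewrite none.
exists j0; move: H; rewrite (bigD1 j0) //= hj0 add1n => -[] H j.
case: eqP => [->//|/eqP hj].
move/eqP: H; rewrite sum_nat_eq0 => /forallP /(_ j); rewrite hj /=.
by case: (b j).
Qed.

Lemma osp_cov k (I : {ffun 'I_k -> {set 'I_n}}) :
  ordered_set_partition I = nonemp I && cov setT I.
Proof.
rewrite /ordered_set_partition /nonemp; congr (_ && _).
apply/idP/idP.
  case/andP => /forallP hd /eqP hu; apply/forallP => l; rewrite in_setT.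
  have : l \in \bigcup_(j < k) I j by rewrite hu in_setT.
  case/bigcupP => j0 _ hl.
  rewrite /cnt (bigD1 j0) //= hl big1 // => j hj.
  have := hd j0 => /forallP /(_ j) /implyP; rewrite eq_sym => /(_ hj) hdis.
  by rewrite (disjointFr hdis hl).
move/forallP => hc; apply/andP; split.
  apply/forallP => j; apply/forallP => j'; apply/implyP => hjj'.
  rewrite -setI_eq0; apply/eqP/setP => l; rewrite inE in_set0.
  apply/negP => /andP [h1 h2]; have := hc l.
  rewrite in_setT /cnt (bigD1 j) //= h1 (bigD1 j') /=; last by rewrite eq_sym.
  by rewrite h2.
apply/eqP/setP => l; rewrite in_setT; have := hc l.
rewrite in_setT /cnt => /eqP /sumb1 [j0 hj0].
by apply/bigcupP; exists j0 => //; rewrite hj0.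
Qed.

Lemma card_sumb (A : {set 'I_n}) : #|A| = (\sum_l (l \in A))%N.
Proof. by rewrite -sum1_card big_mkcond /=; apply: eq_bigr => l _; case: (l \in A). Qed.

Lemma card_cov k S (I : {ffun 'I_k -> {set 'I_n}}) : cov S I -> (\sum_j #|I j|)%N = #|S|.
Proof.
move/forallP => hc.
rewrite card_sumb (eq_bigr (fun j => \sum_l (l \in I j))%N); last by move=> j _; rewrite card_sumb.
rewrite exchange_big /=; apply: eq_bigr => l _.
by have /eqP := hc l.
Qed.

End Cov.


Lemma distr_coef (R : comNzRingType) (M N k : nat) (F : 'I_k -> nat -> R) :
  \sum_(d : {ffun 'I_k -> 'I_M} | (\sum_(j < k) (d j : nat))%N == N) \prod_(j < k) F j (d j)
  = (\prod_(j < k) \sum_(e < M) F j e *: 'X^e)`_N.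
Proof.
rewrite bigA_distr_bigA /= coef_sum [LHS]big_mkcond /=; apply: eq_bigr => d _.
have -> : \prod_(j < k) (F j (d j) *: 'X^(d j)) =
          (\prod_(j < k) F j (d j)) *: 'X^(\sum_(j < k) (d j : nat)).
  rewrite -prodrXr -mul_polyC rmorph_prod -big_split /=.
  by apply: eq_bigr => j _; rewrite mul_polyC.
by rewrite coefZ coefXn eq_sym; case: eqP => _; rewrite ?mulr1 ?mulr0.
Qed.


Lemma sum_delta (R : comNzRingType) M : (0 < M)%N ->
  \sum_(e < M) ((e : nat) == 0%N)%:R *: 'X^e = 1 :> {poly R}.
Proof.
case: M => [//|M] _; rewrite big_ord_recl /= scale1r expr0 big1 ?addr0 // => e _.
by rewrite scale0r.
Qed.

Section Ins.
Variables (R : comNzRingType) (phi : {rmorphism rat -> R}) (g n : nat) (a : 'I_n -> R).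
Hypothesis hM : (0 < g - 1 + n)%N.

Definition ext k (j0 : 'I_k.+1) (J : {ffun 'I_k -> {set 'I_n}}) : {ffun 'I_k.+1 -> {set 'I_n}} :=
  [ffun j => if unlift j0 j is Some j' then J j' else set0].
Definition shr k (j0 : 'I_k.+1) (I : {ffun 'I_k.+1 -> {set 'I_n}}) : {ffun 'I_k -> {set 'I_n}} :=
  [ffun j' => I (lift j0 j')].

Definition Gp (S : {set 'I_n}) : {poly R} := \sum_(e < g - 1 + n) Gw phi a S e *: 'X^e.

Lemma Phi_poly k (I : {ffun 'I_k -> {set 'I_n}}) :
  Phi phi g a I = (\prod_(j < k) Gp (I j))`_(g - 2 + n).
Proof. exact: (distr_coef _ _ (fun j e => Gw phi a (I j) e)). Qed.

Lemma Gp_set0 : Gp set0 = 1.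
Proof. rewrite /Gp; under eq_bigr do rewrite Gw_set0; exact: sum_delta. Qed.

Lemma Phi_ext k (j0 : 'I_k.+1) J : Phi phi g a (ext j0 J) = Phi phi g a J.
Proof.
rewrite !Phi_poly (bigD1_ord j0) //= ffunE unlift_none Gp_set0 mul1r.
by rewrite (eq_bigr (fun j => Gp (J j))) // => j _; rewrite ffunE liftK.
Qed.

Lemma cnt_ext k (j0 : 'I_k.+1) J l : cnt (ext j0 J) l = cnt J l.
Proof.
rewrite /cnt (bigD1_ord j0) //= ffunE unlift_none in_set0 add0n.
by apply: eq_bigr => j _; rewrite ffunE liftK.
Qed.

Lemma shr_ext k (j0 : 'I_k.+1) J : shr j0 (ext j0 J) = J.
Proof. by apply/ffunP => j; rewrite !ffunE liftK. Qed.

Lemma ext_shr k (j0 : 'I_k.+1) (I : {ffun 'I_k.+1 -> {set 'I_n}}) : I j0 = set0 -> ext j0 (shr j0 I) = I.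
Proof.
move=> h; apply/ffunP => j; rewrite ffunE.
by case: (unliftP j0 j) => [j'|] ->; rewrite ?ffunE.
Qed.

Lemma ins k (j0 : 'I_k.+1) S :
 \sum_(I : {ffun 'I_k.+1 -> {set 'I_n}} |
        (cov S I && [forall j, (j != j0) ==> (I j != set0)]) && (I j0 == set0)) Phi phi g a I
 = \sum_(J : {ffun 'I_k -> {set 'I_n}} | nonemp J && cov S J) Phi phi g a J.
Proof.
rewrite (reindex_onto (ext j0) (shr j0)) /=; last first.
  by move=> I /andP[_ /eqP h]; apply: ext_shr.
apply: eq_big => J; last by move=> _; apply: Phi_ext.
rewrite shr_ext eqxx andbT ffunE unlift_none eqxx andbT andbC.
congr (_ && _).
  apply/forallP/forallP => H j.
    by have := H (lift j0 j); rewrite eq_sym neq_lift ffunE liftK.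
  case: (unliftP j0 j) => [j'|] ->; last by rewrite eqxx.
  by rewrite ffunE liftK H implybT.
by apply: eq_forallb => l; rewrite cnt_ext.
Qed.
End Ins.


Section Dec.
Variables (R : comNzRingType) (phi : {rmorphism rat -> R}) (g n : nat) (a : 'I_n -> R).
Variable i0 : 'I_n.
Hypothesis ha : a i0 = 0.
Hypothesis hg : (2 <= g)%N.

Definition addblk k (j0 : 'I_k) (I : {ffun 'I_k -> {set 'I_n}}) : {ffun 'I_k -> {set 'I_n}} :=
  [ffun j => if j == j0 then i0 |: I j else I j].
Definition remblk k (I : {ffun 'I_k -> {set 'I_n}}) : {ffun 'I_k -> {set 'I_n}} :=
  [ffun j => I j :\ i0].
Definition Xs k := \sum_(J : {ffun 'I_k -> {set 'I_n}} | nonemp J && cov [set~ i0] J) Phi phi g a J.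

Lemma setD1_id (A : {set 'I_n}) : i0 \notin A -> A :\ i0 = A.
Proof. by move=> h; apply/setP => l; rewrite !inE; case: eqP => // ->; rewrite (negbTE h). Qed.

Lemma cnt_add k (j0 : 'I_k) (I : {ffun 'I_k -> {set 'I_n}}) l : (forall j, i0 \notin I j) ->
  cnt (addblk j0 I) l = (cnt I l + (l == i0))%N.
Proof.
move=> hni; rewrite /cnt (bigD1 j0) //= [in RHS](bigD1 j0) //= ffunE eqxx in_setU1.
rewrite (eq_bigr (fun j => nat_of_bool (l \in I j))); last by move=> j /negbTE hj; rewrite ffunE hj.
case: eqP => [->|_]; last by rewrite addn0.
by rewrite (negbTE (hni j0)) addn1.
Qed.

Lemma cnt_i0 k (I : {ffun 'I_k -> {set 'I_n}}) S : cov S I -> i0 \notin S -> forall j, i0 \notin I j.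
Proof.
move=> /forallP /(_ i0) /eqP h hS j; move: h; rewrite (negbTE hS) => /sumb0 h.
by rewrite h.
Qed.

Lemma sum_cf k (I : {ffun 'I_k.+1 -> {set 'I_n}}) (d : {ffun 'I_k.+1 -> 'I_(g - 1 + n)}) :
  cov [set~ i0] I -> (\sum_(j < k.+1) (d j : nat))%N = (g - 2 + n)%N ->
  \sum_(j0 < k.+1) cf R (d j0) #|I j0| = (2 * g - 1 + k)%:R.
Proof.
move=> hc hd; rewrite /cf sumrB -!natr_sum.
rewrite big_split /= -big_distrr /= hd sum_nat_const card_ord muln1.
rewrite -big_distrr /= (card_cov hc) cardsC1 card_ord.
have hn : (1 <= n)%N by case: (n) i0 => [[]|].
have -> : (2 * (g - 2 + n) + k.+1 = (2 * g - 1 + k) + 2 * n.-1)%N by lia.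
by rewrite natrD addrK.
Qed.

End Dec.


Section Dec2.
Variables (R : comNzRingType) (phi : {rmorphism rat -> R}) (g n : nat) (a : 'I_n -> R).
Variable i0 : 'I_n.
Hypothesis ha : a i0 = 0.
Hypothesis hg : (2 <= g)%N.

Local Notation PhiL := (Phi phi g a).
Local Notation addblk := (addblk i0).

Definition Qp k (j0 : 'I_k) (I : {ffun 'I_k -> {set 'I_n}}) :=
  cov [set~ i0] I && [forall j, (j != j0) ==> (I j != set0)].

Definition Tt k (j0 : 'I_k) (I : {ffun 'I_k -> {set 'I_n}}) : R :=
  \sum_(d : {ffun 'I_k -> 'I_(g - 1 + n)} | (\sum_(j < k) (d j : nat))%N == (g - 2 + n)%N)
    ((\prod_(j < k) Gw phi a (I j) (d j)) * cf R (d j0) #|I j0|).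

Lemma stepA k (F : {ffun 'I_k -> {set 'I_n}} -> R) :
  \sum_(I : {ffun 'I_k -> {set 'I_n}} | nonemp I && cov setT I) F I =
  \sum_(j0 < k) \sum_(I : {ffun 'I_k -> {set 'I_n}} | (nonemp I && cov setT I) && (i0 \in I j0)) F I.
Proof.
rewrite -(exchange_big_dep xpredT) //=; apply: eq_bigr => I /andP [_ /forallP /(_ i0)].
rewrite in_setT => /eqP /sumb1 [j0 hj0].
by rewrite (big_pred1 j0) // => j; rewrite /= hj0.
Qed.

Lemma stepB k (j0 : 'I_k) :
  \sum_(I : {ffun 'I_k -> {set 'I_n}} | (nonemp I && cov setT I) && (i0 \in I j0)) PhiL I =
  \sum_(I : {ffun 'I_k -> {set 'I_n}} | Qp j0 I) Tt j0 I.
Proof.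
rewrite (reindex_onto (addblk j0) (@remblk n i0 k)) /=; last first.
  move=> I /andP [/andP [_ /forallP hc] hi]; apply/ffunP => j; rewrite !ffunE.
  have /eqP := hc i0; rewrite in_setT => /sumb1 [j1 hj1].
  have e1 : j0 = j1 by apply/eqP; rewrite -hj1.
  case: eqP => [->|/eqP hj]; first by rewrite setD1K.
  by apply: setD1_id; rewrite hj1 -e1 hj.
apply: eq_big => I.
  rewrite ffunE eqxx setU11 andbT.
  apply/idP/idP.
    case/andP => /andP [hne hc] /eqP hr.
    have hni : forall j, i0 \notin I j by move=> j; rewrite -hr ffunE setD11.
    apply/andP; split.
      apply/forallP => l; have /forallP /(_ l) := hc.
      rewrite cnt_add // in_setT in_setC1.
      case: (l =P i0) => [->|/eqP hl]; first by rewrite /= addn1 eqSS.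
      by rewrite /= addn0.
    apply/forallP => j; apply/implyP => hj.
    by have /forallP /(_ j) := hne; rewrite ffunE (negbTE hj).
  case/andP => hc /forallP hne.
  have hni := cnt_i0 hc (negbT (setC11 i0)).
  apply/andP; split; last first.
    apply/eqP/ffunP => j; rewrite /addblk /remblk !ffunE; case: (j =P j0) => _; first by rewrite setU1K.
    exact: setD1_id.
  apply/andP; split.
    apply/forallP => j; rewrite /addblk ffunE; case: (j =P j0) => [_|/eqP hj].
      by apply/set0Pn; exists i0; rewrite setU11.
    by have := hne j; rewrite hj.
  apply/forallP => l; rewrite cnt_add // in_setT.
  have /forallP /(_ l) /eqP -> := hc.
  by rewrite in_setC1; case: (l =P i0).
move=> /andP [_ /eqP hr].
have hni : forall j, i0 \notin I j by move=> j; rewrite -hr /remblk ffunE setD11.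
rewrite /Tt /Phi; apply: eq_bigr => d _.
rewrite (bigD1 j0) //= [in RHS](bigD1 j0) //= {1}/addblk ffunE eqxx (Gw_add _ ha) //.
rewrite (eq_bigr (fun j => Gw phi a (I j) (d j))); first by rewrite mulrAC.
by move=> j /negbTE hj; rewrite /addblk ffunE hj.
Qed.

End Dec2.


Section Dec3.
Variables (R : comNzRingType) (phi : {rmorphism rat -> R}) (g n : nat) (a : 'I_n -> R).
Variable i0 : 'I_n.
Hypothesis ha : a i0 = 0.
Hypothesis hg : (2 <= g)%N.

Local Notation PhiL := (Phi phi g a).

Lemma Tt_empty k (j0 : 'I_k) (I : {ffun 'I_k -> {set 'I_n}}) : I j0 = set0 -> Tt phi g a j0 I = PhiL I.
Proof.
move=> h0; rewrite /Tt /Phi; apply: eq_bigr => d _.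
rewrite (bigD1 j0) //= h0 Gw_set0 cards0 /cf muln0 subr0.
by case: (d j0 : nat) => [|e] /=; rewrite ?mulr1 ?mul0r.
Qed.

Lemma decomp k :
  \sum_(I : {ffun 'I_k.+1 -> {set 'I_n}} | ordered_set_partition I) PhiL I =
  (2 * g - 1 + k)%:R * Xs phi g a i0 k.+1 + (k.+1)%:R * Xs phi g a i0 k.
Proof.
rewrite (eq_bigl (fun I => nonemp I && cov setT I)); last by move=> I; rewrite osp_cov.
rewrite (stepA i0).
under eq_bigr => j0 _ do rewrite (stepB _ _ ha) (bigID (fun I : {ffun 'I_k.+1 -> {set 'I_n}} => I j0 != set0)) /=.
rewrite big_split /=; congr (_ + _).
  have e1 : forall j0 : 'I_k.+1,
     \sum_(I : {ffun 'I_k.+1 -> {set 'I_n}} | Qp i0 j0 I && (I j0 != set0)) Tt phi g a j0 I =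
     \sum_(I : {ffun 'I_k.+1 -> {set 'I_n}} | nonemp I && cov [set~ i0] I) Tt phi g a j0 I.
    move=> j0; apply: eq_bigl => I; rewrite /Qp; apply/idP/idP.
      case/andP => /andP [hc /forallP hne] h0; rewrite hc andbT.
      apply/forallP => j; case: (j =P j0) => [->//|/eqP hj].
      by have := hne j; rewrite hj.
    case/andP => /forallP hne ->; rewrite hne andbT /=.
    by apply/forallP => j; rewrite hne implybT.
  rewrite (eq_bigr _ (fun j0 _ => e1 j0)) exchange_big /= /Xs mulr_sumr.
  apply: eq_bigr => I /andP [_ hc]; rewrite /Tt exchange_big /= /Phi mulr_sumr.
  apply: eq_bigr => d /eqP hd; rewrite -mulr_sumr (sum_cf R hg hc hd) mulrC.
  by [].
have hM : (0 < g - 1 + n)%N by case: (n) i0 => [[]|] //; lia.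
have e2 : forall j0 : 'I_k.+1,
   \sum_(I : {ffun 'I_k.+1 -> {set 'I_n}} | Qp i0 j0 I && ~~ (I j0 != set0)) Tt phi g a j0 I =
   Xs phi g a i0 k.
  move=> j0; rewrite /Xs -(ins phi a hM j0 [set~ i0]); apply: eq_big => I.
    by rewrite /Qp negbK.
  by move=> /andP [_]; rewrite negbK => /eqP h0; apply: Tt_empty.
by rewrite (eq_bigr _ (fun j0 _ => e2 j0)) sumr_const card_ord mulr_natl.
Qed.
End Dec3.


Lemma cq_rec g k : (2 <= g)%N ->
  cq g k.+1 * (2 * g - 1 + k)%:R = - (cq g k.+2 * (k.+2)%:R).
Proof.
move=> hg; rewrite /cq.
set m := (2 * g - 3 + k.+1)%N.
have -> : (2 * g - 3 + k.+2 = m.+1)%N by rewrite /m; lia.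
have -> : (2 * g - 1 + k = m.+1)%N by rewrite /m; lia.
rewrite (factS m) (factS k.+1) [(k.+2 * _)%:R]natrM [(m.+1 * _)%:R]natrM.
move: (m`!) ((k.+1)`!) (fact_gt0 k.+1) => A B hB.
have h1 : B%:R != 0 :> rat by rewrite pnatr_eq0 -lt0n hB.
have h2 : (k.+2)%:R != 0 :> rat by rewrite pnatr_eq0.
rewrite !exprS; move: ((-1 : rat) ^+ k) => s. field.
by rewrite h1 /= -natrD pnatr_eq0.
Qed.

Section Van.
Variables (R : comNzRingType) (phi : {rmorphism rat -> R}) (g n : nat) (a : 'I_n -> R).
Variable i0 : 'I_n.
Hypothesis ha : a i0 = 0.
Hypothesis hg : (2 <= g)%N.
Hypothesis hn : (2 <= n)%N.

Lemma Xs0 : Xs phi g a i0 0 = 0.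
Proof.
have h0 : (0 < n)%N by lia.
have h1 : (1 < n)%N by lia.
have [l hl] : exists l : 'I_n, l != i0.
  case: (Ordinal h0 =P i0) => [e|ne]; last by exists (Ordinal h0); apply/eqP.
  by exists (Ordinal h1); rewrite -e; apply/eqP => -[].
rewrite /Xs big1 // => J /andP [_ /forallP /(_ l)].
by rewrite /cnt big_ord0 in_setC1 hl.
Qed.

Lemma Xsn : Xs phi g a i0 n = 0.
Proof.
rewrite /Xs big1 // => J /andP [/forallP hne hc].
have := card_cov hc; rewrite cardsC1 card_ord => h.
have : (\sum_(j < n) 1 <= \sum_(j < n) #|J j|)%N.
  by apply: leq_sum => j _; rewrite card_gt0 hne.
rewrite h sum_nat_const card_ord muln1; lia.
Qed.

Lemma PG0 : PG phi g a = 0.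
Proof.
rewrite /PG big_add1 /=.
under eq_bigr => k _ do rewrite (decomp phi ha hg).
rewrite (telescope_sumr_eq (fun k => - (phi (cq g k.+1) * (k.+1)%:R * Xs phi g a i0 k))) //.
  by rewrite Xs0 Xsn !mulr0 oppr0 subr0.
move=> k _.
have hc : phi (cq g k.+1) * (2 * g - 1 + k)%:R = - (phi (cq g k.+2) * (k.+2)%:R).
  by rewrite -(rmorph_nat phi) -rmorphM cq_rec // rmorphN rmorphM rmorph_nat.
rewrite mulrDr mulrA hc; ring.
Qed.
End Van.


Lemma PG_morph (R S : comNzRingType) (f : {rmorphism R -> S})
  (phi : {rmorphism rat -> R}) (phi' : {rmorphism rat -> S}) g n
  (a : 'I_n -> R) (a' : 'I_n -> S) :
  (forall x, f (phi x) = phi' x) -> (forall l, f (a l) = a' l) ->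
  f (PG phi g a) = PG phi' g a'.
Proof.
move=> hphi ha.
have hG : forall S0 e, f (Gw phi a S0 e) = Gw phi' a' S0 e.
  move=> S0 e; rewrite /Gw /BG !rmorphM rmorph_prod hphi /asumG.
  congr (_ * _ * _).
    apply: eq_bigr => i _; rewrite rmorphB rmorph_nat rmorphD rmorph1 rmorphM rmorph_sum.
    by rewrite rmorph_nat (eq_bigr _ (fun l _ => ha l)).
  by rewrite rmorph_prod; apply: eq_bigr => i _; rewrite rmorphB !rmorph_nat.
rewrite /PG rmorph_sum; apply: eq_bigr => k _.
rewrite rmorphM hphi rmorph_sum; congr (_ * _); apply: eq_bigr => I _.
rewrite /Phi rmorph_sum; apply: eq_bigr => d _.
by rewrite rmorph_prod; apply: eq_bigr => j _; rewrite hG.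
Qed.

From mathcomp Require Import mpoly.

Section MP.
Variable n : nat.
Local Notation P := {mpoly rat[n]}.

Definition lq (i0 : 'I_n) : n.-tuple P := [tuple (if j == i0 then 0 else 'X_j) | j < n].

Lemma lq_nth i0 (j : 'I_n) : (lq i0)`_j = if j == i0 then 0 else 'X_j.
Proof. by rewrite -tnth_nth tnth_mktuple. Qed.

Lemma X_neq0 (i : 'I_n) : ('X_i : P) != 0.
Proof. by rewrite -msize_poly_eq0 msizeX mdeg1. Qed.

Lemma msizeXi (i : 'I_n) : msize ('X_i : P) = 2%N.
Proof. by rewrite msizeX mdeg1. Qed.

Lemma monoX_sub (m : 'X_{1..n}) i0 :
  ('X_[m] : P) - ('X_[m] \mPo lq i0) = 'X_i0 * (if (0 < m i0)%N then 'X_[m - U_(i0)] else 0).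
Proof.
rewrite comp_mpolyX.
case: ifP => hm.
  rewrite (bigD1 i0) //= tnth_mktuple eqxx expr0n.
  have -> : (m i0 == 0%N) = false by apply/negbTE; rewrite -lt0n.
  rewrite mul0r subr0 -mpolyXD; congr 'X_[_]; apply/mnmP => j.
  by rewrite mnmDE mnmBE mnm1E; case: eqP => [<-|_]; lia.
rewrite mulr0; apply/eqP; rewrite subr_eq0 mpolyXE_id; apply/eqP; apply: eq_bigr => j _.
rewrite tnth_mktuple; case: eqP => [->|//].
by move/negbT: hm; rewrite -leqNgt leqn0 => /eqP ->; rewrite !expr0.
Qed.

Lemma divX (p : P) i0 : p \mPo lq i0 = 0 -> exists q, p = 'X_i0 * q.
Proof.
move=> h.
set q := \sum_(m <- msupp p) p@_m *: (if (0 < m i0)%N then 'X_[m - U_(i0)] else 0).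
exists q.
have <- : p - (p \mPo lq i0) = 'X_i0 * q; last by rewrite h subr0.
rewrite {1}(mpolyE p) comp_mpolyEX -sumrB /q mulr_sumr.
by apply: eq_bigr => m _; rewrite -scalerBr monoX_sub scalerAr.
Qed.
Lemma divXall (s : seq 'I_n) : uniq s -> forall p : P, p != 0 ->
  (forall i, i \in s -> p \mPo lq i = 0) ->
  exists q, p = (\prod_(i <- s) 'X_i) * q /\ (msize q + size s = msize p)%N.
Proof.
elim: s => [|i s IH] /= hu p hp hv.
  by exists p; rewrite big_nil mul1r addn0.
case/andP: hu => his hu.
have [q1 e1] := divX (hv i (mem_head i s)).
have hq1 : q1 != 0 by apply: contraNneq hp => e; rewrite e1 e mulr0.
have hv1 : forall j, j \in s -> q1 \mPo lq j = 0.
  move=> j hj; have := hv j; rewrite in_cons hj orbT => /(_ isT).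
  rewrite e1 rmorphM /= comp_mpolyXU lq_nth.
  have -> : (i == j) = false by apply/negbTE; apply: contraNneq his => ->.
  by move/eqP; rewrite mulf_eq0 (negbTE (X_neq0 i)) => /eqP.
have [q [e2 hs]] := IH hu q1 hq1 hv1.
exists q; split; first by rewrite e1 e2 big_cons mulrA.
rewrite e1 msizeM // ?X_neq0 // msizeXi -hs /=; lia.
Qed.
Definition dle (D : nat) (p : P) := (msize p <= D.+1)%N.

Lemma dle_mono D D' p : (D <= D')%N -> dle D p -> dle D' p.
Proof. by rewrite /dle => h1 h2; apply: leq_trans h2 _; rewrite ltnS. Qed.

Lemma dle_mul D1 D2 p q : dle D1 p -> dle D2 q -> dle (D1 + D2) (p * q).
Proof.
rewrite /dle => h1 h2.
case: (p =P 0) => [->|/eqP hp]; first by rewrite mul0r msize0.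
case: (q =P 0) => [->|/eqP hq]; first by rewrite mulr0 msize0.
rewrite msizeM //; move: (msize p) (msize q) h1 h2 => x y h1 h2; lia.
Qed.

Lemma dle_add D p q : dle D p -> dle D q -> dle D (p + q).
Proof. rewrite /dle => h1 h2; apply: leq_trans (msizeD_le _ _) _; rewrite geq_max h1 h2. by []. Qed.

Lemma dle_opp D p : dle D p -> dle D (- p).
Proof. by rewrite /dle msizeN. Qed.

Lemma dle0 D : dle D 0.
Proof. by rewrite /dle msize0. Qed.

Lemma dle_sum D (I : Type) (r : seq I) (Pr : pred I) (F : I -> P) :
  (forall i, Pr i -> dle D (F i)) -> dle D (\sum_(i <- r | Pr i) F i).
Proof. move=> h; apply: (big_ind (dle D)) => //; [exact: dle0 | exact: dle_add]. Qed.

Lemma dle_prod (I : Type) (r : seq I) (Pr : pred I) (F : I -> P) (Df : I -> nat) :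
  (forall i, Pr i -> dle (Df i) (F i)) ->
  dle (\sum_(i <- r | Pr i) Df i)%N (\prod_(i <- r | Pr i) F i).
Proof.
move=> h; apply: (big_rec2 (fun (x : nat) (y : P) => dle x y)).
  by rewrite /dle msize1.
by move=> i x y hi hxy; apply: dle_mul => //; apply: h.
Qed.

Lemma dle_C D c : dle D c%:MP.
Proof. by rewrite /dle msizeC; case: (c != 0). Qed.

Lemma dle_nat D k : dle D (k%:R : P).
Proof. by rewrite -(rmorph_nat (@mpolyC n rat)); apply: dle_C. Qed.

Lemma dle_X (i : 'I_n) : dle 1 'X_i.
Proof. by rewrite /dle msizeXi. Qed.

Lemma dle_Gw (S : {set 'I_n}) e :
  dle (2 * e) (Gw (@mpolyC n rat) (fun l => 'X_l) S e).
Proof.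
rewrite /Gw /BG -[X in dle X _]addn0 -[X in dle X _]addn0.
apply: dle_mul; last first.
  eapply dle_mono; last first.
    apply: (@dle_prod _ _ _ _ (fun _ => 0%N)) => i _.
    by apply: dle_add; [apply: dle_nat | apply: dle_opp; apply: dle_nat].
  by rewrite big1.
apply: dle_mul; last by apply: dle_C.
eapply dle_mono; last first.
  apply: (@dle_prod _ _ _ _ (fun _ => 1%N)) => i _.
  apply: dle_add; last by apply: dle_opp; apply: dle_nat.
  apply: dle_add; last by apply: (dle_mono (leq0n 1)); rewrite /dle msize1.
  rewrite -[1%N]add0n; apply: dle_mul; first by apply: dle_nat.
  by apply: dle_sum => l _; apply: dle_X.
by rewrite sum_nat_const card_ord muln1.
Qed.
Lemma dle_PG g : dle (2 * (g - 2 + n)) (PG (@mpolyC n rat) g (fun l => 'X_l)).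
Proof.
rewrite /PG; apply: dle_sum => k _; rewrite -[X in dle X _]add0n.
apply: dle_mul; first by apply: dle_C.
apply: dle_sum => I _; rewrite /Phi; apply: dle_sum => d /eqP hd.
eapply dle_mono; last first.
  by apply: (@dle_prod _ _ _ _ (fun j => 2 * d j)%N) => j _; apply: dle_Gw.
by rewrite -big_distrr /= hd.
Qed.
End MP.

Import Pilot.Defs.
Unset Implicit Arguments.

Theorem corollary5p4 (g n : nat) (hg : (2 <= g)%N) (hn : (2 <= n)%N) :
  exists Q : mpoly n,
    mdeg_le Q (2 * g - 4 + n) /\
    forall a : 'I_n -> rat, Pgn g n a = (\prod_(i < n) a i) * meval Q a.
Proof.
pose p := PG (@mpolyC n rat) g (fun l => 'X_l).
have hev : forall a, Pgn g n a = p.@[a].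
  move=> a; have -> : Pgn g n a = @PG _ idfun g n a by []. rewrite /p; symmetry.
  by apply: (@PG_morph _ _ (mpoly.meval a)) => [x|l]; [exact: mevalC | exact: mevalXU].
case: (p =P 0) => [p0 | /eqP pn0].
  by exists [::]; split => // a; rewrite hev p0 meval0 /Defs.meval big_nil mulr0.
have hv : forall i, i \in index_enum 'I_n -> p \mPo lq i = 0.
  move=> i _; rewrite /p (@PG_morph _ _ (comp_mpoly (lq i)) _ (@mpolyC n rat) g n _ (fun l => (lq i)`_l)).
  - by apply: (@PG0 _ _ _ _ _ i) => //; rewrite lq_nth eqxx.
  - by move=> x; exact: comp_mpolyC.
  - by move=> l; exact: comp_mpolyXU.
have [q [eq hs]] := divXall (index_enum_uniq _) pn0 hv.
have hsz : size (index_enum 'I_n) = n by rewrite /index_enum -enumT -cardE card_ord.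
have hdeg := dle_PG n g; rewrite /dle -/p in hdeg.
exists [seq (q@_m, [ffun i => m i]) | m <- msupp q]; split.
  rewrite /mdeg_le all_map; apply/allP => m hm /=.
  rewrite (eq_bigr (fun i => m i)); last by move=> i _; rewrite ffunE.
  rewrite -mdegE; have := msize_mdeg_lt hm.
  move: (msize q) (msize p) (mdeg m) hs hdeg; rewrite hsz => x y z; lia.
move=> a; rewrite hev eq rmorphM rmorph_prod /=.
congr (_ * _); first by apply: eq_bigr => i _; rewrite mevalXU.
rewrite /Defs.meval big_map mevalE; apply: eq_bigr => m _ /=.
by congr (_ * _); apply: eq_bigr => i _; rewrite ffunE.
Qed.
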